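(* Let $1\le p\le N$ and let $\Omega=\bm\omega^1\wedge\dots\wedge\bm\omega^p$ be a simple $p$-form. Then each of $\vec\omega^1,\dots,\vec\omega^p$ is an eigenvector of its superenergy tensor $T_{ab}\{\Omega_{[p]}\}$, all with the same eigenvalue $\frac{(-1)^{p-1}(\Omega\cdot\Omega)}{2\,p!}$, i.e. $\omega^i_aT_b{}^a\{\Omega_{[p]}\}=\frac{(-1)^{p-1}(\Omega\cdot\Omega)}{2\,p!}\omega^i_b$ for $i=1,\dots,p$.
   Context: Lorentzian metric $g_{ab}$ of signature $(+,-,\dots,-)$ in dimension $N$; $\Omega\cdot\Omega$ is full contraction; simple $p$-form: wedge product of $p$ linearly independent 1-forms $\bm\omega^i$, with $\vec\omega^i$ the corresponding vectors. Superenergy tensor: $T_{ab}\{\Omega_{[p]}\}=\frac{(-1)^{p-1}}{(p-1)!}[\Omega_{a a_2\dots a_p}\Omega_b{}^{a_2\dots a_p}-\frac{1}{2p}(\Omega\cdot\Omega)g_{ab}]$ (equal to $\frac12 f^2 g_{ab}$ if $\Omega=f\eta$ is an $N$-form). *)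

(* Defs.v *)
From HB Require Import structures.
From mathcomp Require Import all_boot all_order all_algebra.
Set Implicit Arguments. Unset Strict Implicit. Unset Printing Implicit Defensive.
Import Order.TTheory GRing.Theory Num.Theory.
Local Open Scope ring_scope.

(* Components are taken w.r.t. a fixed basis of an N-dimensional real vector
   space.  The metric g_{ab} is an N x N matrix; g^{ab} is its inverse. *)

Definition lorentzian (R : realFieldType) (N : nat) (g : 'M[R]_N) : Prop :=
  exists P : 'M[R]_N, P \in unitmx /\
    P^T *m g *m P = diag_mx (\row_(i < N) (if (i : nat) == 0%N then 1 else -1)).

Definition ginv (R : realFieldType) (N : nat) (g : 'M[R]_N) : 'M[R]_N := invmx g.

(* A covariant p-tensor is given by its components Om_{a_1 ... a_p},
   indexed by functions A : 'I_p -> 'I_N (A k = a_(k+1)). *)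
Definition ptensor (R : realFieldType) (N p : nat) := {ffun 'I_p -> 'I_N} -> R.

(* wedge product of p one-forms, the rows of w (row i = omega^(i+1)):
   (omega^1 /\ ... /\ omega^p)_{a_1..a_p} = det [omega^i_{a_j}] *)
Definition wedge (R : realFieldType) (N p : nat) (w : 'M[R]_(p, N))
  : ptensor R N p :=
  fun A => \det (\matrix_(i < p, j < p) w i (A j)).

Definition fullcontr (R : realFieldType) (N p : nat) (g : 'M[R]_N)
  (Om : ptensor R N p) : R :=
  \sum_(A : {ffun 'I_p -> 'I_N}) \sum_(B : {ffun 'I_p -> 'I_N})
     Om A * Om B * \prod_(k < p) ginv g (A k) (B k).

Definition fcons (N q : nat) (a : 'I_N) (A : {ffun 'I_q -> 'I_N})
  : {ffun 'I_q.+1 -> 'I_N} :=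
  [ffun k : 'I_q.+1 => match unlift ord0 k with Some k' => A k' | None => a end].

(* superenergy tensor of a p-form, p = q+1:
   T_ab = (-1)^(p-1)/(p-1)! [ Om_{a a2..ap} Om_b^{a2..ap} - (1/(2p)) (Om.Om) g_ab ] *)
Definition superenergy (R : realFieldType) (N q : nat) (g : 'M[R]_N)
  (Om : ptensor R N q.+1) (a b : 'I_N) : R :=
  ((-1) ^+ q / (q`!)%:R) *
  ((\sum_(A : {ffun 'I_q -> 'I_N}) \sum_(B : {ffun 'I_q -> 'I_N})
       Om (fcons a A) * Om (fcons b B) * \prod_(k < q) ginv g (A k) (B k))
   - fullcontr g Om / (2 * q.+1)%:R * g a b).

(* Main.v *)
Require Import Defs.
From HB Require Import structures.
From mathcomp Require Import all_boot all_order all_algebra.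
From mathcomp Require Import perm.
Import Order.TTheory GRing.Theory Num.Theory.
Local Open Scope ring_scope.
From mathcomp Require Import ring.

Section S.
Variable R : comNzRingType.

Lemma detE_tr n (A : 'M[R]_n) :
  \det A = \sum_(s : 'S_n) (-1) ^+ s * \prod_j A (s j) j.
Proof. by rewrite -det_tr; apply: eq_bigr => s _; congr (_ * _); apply: eq_bigr => j _; rewrite mxE. Qed.

Lemma det_mul_expand n N (Y : 'M[R]_(n, N)) (C : 'M[R]_(N, n)) :
  \det (Y *m C) = \sum_(B : {ffun 'I_n -> 'I_N})
     (\prod_j C (B j) j) * \det (\matrix_(i, j) Y i (B j)).
Proof.
rewrite detE_tr.
transitivity (\sum_(s : 'S_n) (-1) ^+ s * \sum_(B : {ffun 'I_n -> 'I_N}) \prod_j (Y (s j) (B j) * C (B j) j)).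
  apply: eq_bigr => s _; congr (_ * _).
  idtac; rewrite (eq_bigr (fun j => \sum_b (Y (s j) b * C b j))); last by move=> j _; exact: mxE.
  by rewrite bigA_distr_bigA.
under eq_bigr do rewrite big_distrr /=.
rewrite exchange_big /=; apply: eq_bigr => B _.
rewrite detE_tr big_distrr /=; apply: eq_bigr => s _.
rewrite big_split /= [RHS]mulrCA [X in _ = _ * (_ * X)](eq_bigr (fun j => Y (s j) (B j))); last by move=> j _; rewrite mxE.
by rewrite [X in _ * X]mulrC.
Qed.

Definition subd {n N} (X : 'M[R]_(n, N)) (A : {ffun 'I_n -> 'I_N}) :=
  \det (\matrix_(i, j) X i (A j)).

Lemma gram n N (X Y : 'M[R]_(n, N)) (h : 'M[R]_N) :
  \sum_(A : {ffun 'I_n -> 'I_N}) \sum_(B : {ffun 'I_n -> 'I_N})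
     subd X A * subd Y B * \prod_(k < n) h (A k) (B k)
  = n`!%:R * \det (X *m h *m Y^T).
Proof.
set Z := Y *m h^T.
transitivity (\sum_(A : {ffun 'I_n -> 'I_N}) subd X A * subd Z A).
  apply: eq_bigr => A _.
  transitivity (subd X A * \det (Y *m \matrix_(b, k) h (A k) b)).
    rewrite det_mul_expand big_distrr /=; apply: eq_bigr => B _.
    rewrite -mulrA; congr (_ * _); rewrite mulrC; congr (_ * _).
    by apply: eq_bigr => k _; rewrite mxE.
  congr (_ * _); rewrite /subd; congr (\det _); apply/matrixP => i j.
  rewrite !mxE; apply: eq_bigr => b _; by rewrite !mxE.
transitivity (\sum_(s : 'S_n) (-1) ^+ s * \det (X *m \matrix_(a, k) Z (s k) a)).
  under eq_bigr do rewrite [subd Z _]detE_tr big_distrr /=.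
  rewrite exchange_big /=; apply: eq_bigr => s _.
  rewrite det_mul_expand big_distrr /=; apply: eq_bigr => A _.
  rewrite mulrCA; congr (_ * _); rewrite mulrC; congr (_ * _).
  by apply: eq_bigr => k _; rewrite !mxE.
transitivity (\sum_(s : 'S_n) \det (X *m h *m Y^T)).
  apply: eq_bigr => s _.
  have -> : X *m \matrix_(a, k) Z (s k) a = col_perm s (X *m Z^T).
    apply/matrixP => i j; rewrite !mxE; apply: eq_bigr => a _; by rewrite !mxE.
  rewrite col_permE det_mulmx det_perm odd_permV mulrCA -signr_addb addbb mulr1.
  by rewrite /Z trmx_mul trmxK mulmxA.
by rewrite sumr_const card_Sn mulr_natl.
Qed.

Lemma wedge_expand n N (w : 'M[R]_(n.+1, N)) (c : 'I_N) (B : {ffun 'I_n -> 'I_N}) :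
  \det (\matrix_(i, j) w i (fcons c B j)) =
  \sum_(k < n.+1) w k c * ((-1) ^+ k * subd (row' k w) B).
Proof.
rewrite (expand_det_col _ ord0); apply: eq_bigr => k _.
rewrite !mxE /fcons ffunE unlift_none; congr (_ * _).
rewrite /cofactor addn0; congr (_ * _); rewrite /subd; congr (\det _).
by apply/matrixP => x y; rewrite !mxE ffunE liftK.
Qed.

Lemma contr_swap N p (w : 'M[R]_(p, N)) (h : 'M[R]_N) i (X : 'I_N -> R) :
  \sum_(a < N) w i a * (\sum_(c < N) h a c * X c) = \sum_(c < N) (w *m h) i c * X c.
Proof.
under eq_bigr do rewrite big_distrr /=.
rewrite exchange_big /=; apply: eq_bigr => c _.
rewrite mxE big_distrl /=; apply: eq_bigr => a _; by rewrite mulrA.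
Qed.

Lemma minor_gram n N (w : 'M[R]_(n.+1, N)) (h : 'M[R]_N) k j :
  row' k w *m h *m (row' j w)^T = row' k (col' j (w *m h *m w^T)).
Proof.
apply/matrixP => x y; rewrite !mxE; apply: eq_bigr => c _; rewrite !mxE; congr (_ * _); by apply: eq_bigr => a _; rewrite !mxE.
Qed.

Lemma Spart n N (w : 'M[R]_(n.+1, N)) (h : 'M[R]_N) (i : 'I_n.+1) (b : 'I_N) :
  \sum_(c < N) (w *m h) i c *
    (\sum_(A : {ffun 'I_n -> 'I_N}) \sum_(B : {ffun 'I_n -> 'I_N})
       \det (\matrix_(i0, j) w i0 (fcons b A j)) * \det (\matrix_(i0, j) w i0 (fcons c B j))
       * \prod_(k < n) h (A k) (B k))
  = n`!%:R * \det (w *m h *m w^T) * w i b.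
Proof.
set G := w *m h *m w^T.
have HB : forall B : {ffun 'I_n -> 'I_N},
   \sum_(c < N) (w *m h) i c * \det (\matrix_(i0, j) w i0 (fcons c B j))
   = \sum_(j < n.+1) G i j * ((-1) ^+ j * subd (row' j w) B).
  move=> B; under eq_bigr do rewrite wedge_expand big_distrr /=.
  rewrite exchange_big /=; apply: eq_bigr => j _.
  rewrite /G [G in _ = G * _]mxE big_distrl /=; apply: eq_bigr => c _.
  by rewrite mulrA !mxE.
transitivity (\sum_(A : {ffun 'I_n -> 'I_N}) \sum_(B : {ffun 'I_n -> 'I_N})
   (\sum_(k < n.+1) w k b * ((-1) ^+ k * subd (row' k w) A)) *
   (\sum_(j < n.+1) G i j * ((-1) ^+ j * subd (row' j w) B)) * \prod_(k < n) h (A k) (B k)).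
  under eq_bigr do rewrite big_distrr /=.
  rewrite exchange_big /=; apply: eq_bigr => A _.
  under eq_bigr do rewrite big_distrr /=.
  rewrite exchange_big /=; apply: eq_bigr => B _.
  rewrite -wedge_expand -HB big_distrr /= big_distrl /=.
  by apply: eq_bigr => c _; ring.
transitivity (\sum_(k < n.+1) \sum_(j < n.+1) w k b * G i j * ((-1) ^+ (k + j) *
   (\sum_(A : {ffun 'I_n -> 'I_N}) \sum_(B : {ffun 'I_n -> 'I_N})
      subd (row' k w) A * subd (row' j w) B * \prod_(l < n) h (A l) (B l)))).
  transitivity (\sum_(A : {ffun 'I_n -> 'I_N}) \sum_(B : {ffun 'I_n -> 'I_N})
     \sum_(k < n.+1) \sum_(j < n.+1) w k b * G i j * ((-1) ^+ (k + j) *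
      (subd (row' k w) A * subd (row' j w) B * \prod_(l < n) h (A l) (B l)))).
    apply: eq_bigr => A _; apply: eq_bigr => B _.
    rewrite big_distrl /= big_distrl /=; apply: eq_bigr => k _.
    rewrite big_distrr /= big_distrl /=; apply: eq_bigr => j _.
    rewrite exprD; ring.
  under eq_bigr => A _ do rewrite exchange_big /=.
  rewrite exchange_big /=.
  under eq_bigr => k _ do under eq_bigr => A _ do rewrite exchange_big /=.
  under eq_bigr => k _ do rewrite exchange_big /=.
  apply: eq_bigr => k _; apply: eq_bigr => j _.
  rewrite big_distrr /= big_distrr /=; apply: eq_bigr => A _.
  by rewrite big_distrr /= big_distrr /=.
under eq_bigr => k _ do under eq_bigr => j _ do rewrite gram minor_gram -/G.
clearbody G; transitivity (\sum_(k < n.+1) w k b * n`!%:R * (G *m \adj G) i k).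
  apply: eq_bigr => k _; rewrite mxE !big_distrr /=; apply: eq_bigr => j _.
  rewrite mxE /cofactor; ring.
rewrite mul_mx_adj; under eq_bigr do rewrite mxE.
rewrite (bigD1 i) //= big1 ?addr0; first by rewrite eqxx mulr1n; ring.
by move=> k; rewrite eq_sym => /negbTE ->; rewrite mulr0n mulr0.
Qed.
End S.

Lemma sum_pull (R : comNzRingType) N (f G : 'I_N -> R) k :
  \sum_(c < N) f c * (k * G c) = k * \sum_(c < N) f c * G c.
Proof. by rewrite big_distrr; apply: eq_bigr => c _; rewrite mulrCA. Qed.

Lemma lorentz_facts (R : realFieldType) (N : nat) (g : 'M[R]_N) :
  lorentzian g -> g \in unitmx /\ g^T = g.
Proof.
move=> [P [hP hD]].
have hPt : P^T \in unitmx by rewrite unitmx_tr.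
split.
  rewrite unitmxE unitfE.
  have : \det (P^T *m g *m P) != 0.
    rewrite hD det_diag; apply/prodf_neq0 => k _; rewrite mxE.
    by case: ifP => _; rewrite ?oppr_eq0 oner_eq0.
  by rewrite !det_mulmx; apply: contra => /eqP ->; rewrite mulr0 mul0r.
have e : P^T *m g^T *m P = P^T *m g *m P.
  by rewrite hD -tr_diag_mx -hD !trmx_mul trmxK mulmxA.
have key : forall M : 'M[R]_N, M = invmx P^T *m (P^T *m M *m P) *m invmx P.
  by move=> M; rewrite -!mulmxA mulmxV // mulmx1 !mulmxA mulVmx ?mul1mx.
by rewrite (key g^T) e -key.
Qed.

Theorem mainTheorem6 (R : realFieldType) (N q : nat) (g : 'M[R]_N)
  (hg : lorentzian g) (hpN : (q.+1 <= N)%N) (w : 'M[R]_(q.+1, N))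
  (hw : row_free w) :
  forall (i : 'I_q.+1) (b : 'I_N),
    \sum_(a < N) w i a * (\sum_(c < N) ginv g a c * superenergy g (wedge w) b c)
    = (-1) ^+ q * fullcontr g (wedge w) / (2 * (q.+1)`!)%:R * w i b.
Proof.
move=> i b.
have [hu hs] := lorentz_facts _ _ _ hg.
have hF : fullcontr g (wedge w) = (q.+1)`!%:R * \det (w *m ginv g *m w^T) := gram _ _ _ w w (ginv g).
rewrite contr_swap /superenergy.
under eq_bigr do rewrite mulrBr mulrBr.
rewrite big_split /= sumrN.
rewrite sum_pull [in X in X - _]/wedge (Spart _ _ _ w (ginv g) i b).
have -> : \sum_(c < N) (w *m ginv g) i c * (((-1) ^+ q / (q`!)%:R) * (fullcontr g (wedge w) / (2 * q.+1)%:R * g b c))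
   = ((-1) ^+ q / (q`!)%:R) * (fullcontr g (wedge w) / (2 * q.+1)%:R) * w i b.
  transitivity (((-1) ^+ q / (q`!)%:R) * (fullcontr g (wedge w) / (2 * q.+1)%:R) * (w *m ginv g *m g^T) i b).
    rewrite [in RHS]mxE big_distrr /=; apply: eq_bigr => c _; rewrite !mxE; ring.
  by rewrite hs -mulmxA mulVmx // mulmx1.
rewrite hF factS !natrM.
have h1 : (q`!)%:R != 0 :> R by rewrite pnatr_eq0 -lt0n fact_gt0.
have h2 : (q.+1)%:R != 0 :> R by rewrite pnatr_eq0.
have h3 : 2%:R != 0 :> R by rewrite pnatr_eq0.
field.
by rewrite h1 addrC natr1 h2.
Qed.
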